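(* Let $d\le n$ be positive integers (with $d\ll n$), let $U\subseteq\mathbb{R}^n$, and let $F:U\to\mathbb{R}^n$ with $F(\bar x)=0$ for some $\bar x\in U$, and let $\mathcal{H}F:U\rightrightarrows\mathbb{R}^{n\times n}$ be a set-valued map and $c>0$ such that $$\forall x\in U,\quad \sup_{H\in\mathcal{H}F(x)}\|F(x)-H(x-\bar x)\|\le c\,\|x-\bar x\|.$$ Let $\mathcal{S}$ be a Johnson–Lindenstrauss-type probability distribution over $\mathbb{R}^{d\times n}$ (see context). Let $y\in U$, $H\in\mathcal{H}F(y)$, let $S$ be sampled from $\mathcal{S}$, and assume there exist $\varepsilon>0$ and $\delta>0$ such that, with probability at least $1-\delta$, all three of the following hold: (i) $\|S^TSHS^TS-H\|\le\varepsilon$; (ii) $\|y-\bar x-S^T(SHS^T)^{-1}SF(y)\|\le(1+\varepsilon)\,\|Sy-S\bar x-(SHS^T)^{-1}SF(y)\|$; (iii) $\|SF(y)-(SHS^T)S(y-\bar x)\|\le(1+\varepsilon)\,\|F(y)-S^T(SHS^T)S(y-\bar x)\|$. Let $y^{+}=y-S^T(SHS^T)^{-1}SF(y)$ (an element of the sketched Newton-type operator $\mathcal{N}_{\mathcal{H}F}(y,S)$, so $SHS^T$ is invertible). Then $$\mathbb{P}\left(\|y^{+}-\bar x\|\le(1+\varepsilon)^2(c+\varepsilon)\,\|(SHS^T)^{-1}\|\,\|y-\bar x\|\right)\ge 1-\delta.$$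
   Context: Norms are Euclidean on vectors and Frobenius on matrices. A Johnson–Lindenstrauss-type distribution over $\mathbb{R}^{d\times n}$ is one for which there are $\varepsilon'>0$, $\delta'<1/2$ with $d\in\mathcal{O}(-\varepsilon'^{-2}\log\delta')$ such that for every $x\in\mathbb{R}^n$ with $\|x\|=1$, a sample $A$ satisfies $\mathbb{P}(|\|Ax\|^2-1|\le\varepsilon')\ge 1-\delta'$ (e.g. matrices with i.i.d. standard normal entries). The sketched Newton-type operator is $\mathcal{N}_{\mathcal{H}F}(x,S)=\{x-S^T(SHS^T)^{-1}SF(x)\;|\;H\in\mathcal{H}F(x),\ \det SHS^T\neq 0\}$. *)

(* Defs.v *)
From HB Require Import structures.
From mathcomp Require Import all_boot all_order all_algebra.
From mathcomp Require Import all_classical all_reals all_analysis.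
Set Implicit Arguments. Unset Strict Implicit. Unset Printing Implicit Defensive.
Import Order.TTheory GRing.Theory Num.Theory.
Local Open Scope classical_set_scope.
Local Open Scope ring_scope.

(* Frobenius norm of a matrix; for column vectors 'cV_n this is the Euclidean norm. *)
Definition frob {R : realType} {m n : nat} (A : 'M[R]_(m, n)) : R :=
  Num.sqrt (\sum_(i < m) \sum_(j < n) A i j ^+ 2).

Definition JL_type {d0 : measure_display} {T : measurableType d0} {R : realType}
  (P : probability T R) (d n : nat) (S : T -> 'M[R]_(d, n)) : Prop :=
  exists (eps' delta' C : R),
    [/\ 0 < eps', 0 < delta', delta' < 2^-1, 0 < C &
        d%:R <= C * (- (eps' ^-2) * ln delta')] /\
        forall x : 'cV[R]_n, frob x = 1 ->
          (P [set w | (`| frob (S w *m x) ^+ 2 - 1 | <= eps')%R] >= (1 - delta')%:E)%E.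

(* Main.v *)
Require Import Defs.
From HB Require Import structures.
From mathcomp Require Import all_boot all_order all_algebra.
From mathcomp Require Import all_classical all_reals all_analysis.
From mathcomp Require Import ring lra.
From mathcomp Require Import measurable_realfun lebesgue_integral.
Import Order.TTheory GRing.Theory Num.Theory.
Local Open Scope classical_set_scope.
Local Open Scope ring_scope.

Section CS.
Variable R : realType.

Lemma CS (I : finType) (a b : I -> R) :
  (\sum_i a i * b i) ^+ 2 <= (\sum_i a i ^+ 2) * (\sum_i b i ^+ 2).
Proof.
have E : \sum_i \sum_j (a i * b j - a j * b i) ^+ 2 =
   2 * ((\sum_i a i ^+ 2) * (\sum_i b i ^+ 2) - (\sum_i a i * b i) ^+ 2).
  have -> : \sum_i \sum_j (a i * b j - a j * b i) ^+ 2 =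
     \sum_i \sum_j ((a i ^+ 2 * b j ^+ 2) + (a j ^+ 2 * b i ^+ 2)
     - 2 * ((a i * b i) * (a j * b j))).
    by apply: eq_bigr => i _; apply: eq_bigr => j _; ring.
  under eq_bigr do rewrite sumrB big_split /=.
  rewrite sumrB big_split /=.
  under [X in _ - X]eq_bigr do rewrite -mulr_sumr.
  rewrite -mulr_sumr.
  rewrite [X in _ + X - _]exchange_big /=.
  rewrite expr2 !big_distrlr /=; ring.
have : 0 <= \sum_i \sum_j (a i * b j - a j * b i) ^+ 2.
  by apply: sumr_ge0 => i _; apply: sumr_ge0 => j _; exact: sqr_ge0.
rewrite E => h; lra.
Qed.
End CS.
Set Implicit Arguments. Unset Strict Implicit.
Section Frob.
Variable R : realType.
Definition sf {m n : nat} (A : 'M[R]_(m, n)) : R := \sum_(i < m) \sum_(j < n) A i j ^+ 2.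

Lemma sf_ge0 m n (A : 'M[R]_(m, n)) : 0 <= sf A.
Proof. by apply: sumr_ge0 => i _; apply: sumr_ge0 => j _; exact: sqr_ge0. Qed.

Lemma frob_ge0 m n (A : 'M[R]_(m, n)) : 0 <= frob A.
Proof. exact: sqrtr_ge0. Qed.

Lemma frob_sq m n (A : 'M[R]_(m, n)) : frob A ^+ 2 = sf A.
Proof. exact/sqr_sqrtr/sf_ge0. Qed.

Lemma frob_le m n (A : 'M[R]_(m, n)) b : 0 <= b -> sf A <= b ^+ 2 -> frob A <= b.
Proof. move=> b0 h; have := frob_ge0 A; have := frob_sq A; nra. Qed.

Lemma frob_mul m n p (A : 'M[R]_(m, n)) (B : 'M[R]_(n, p)) :
  frob (A *m B) <= frob A * frob B.
Proof.
apply: frob_le; first by apply: mulr_ge0; apply: frob_ge0.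
rewrite exprMn !frob_sq /sf.
rewrite [X in _ <= _ * X]exchange_big /= big_distrlr /=.
apply: ler_sum => i _; apply: ler_sum => j _; rewrite mxE.
exact: CS.
Qed.

Lemma frob_add m n (A B : 'M[R]_(m, n)) : frob (A + B) <= frob A + frob B.
Proof.
apply: frob_le; first by apply: addr_ge0; apply: frob_ge0.
have cs : (\sum_i \sum_j A i j * B i j) <= frob A * frob B.
  have h : (\sum_i \sum_j A i j * B i j) ^+ 2 <= (frob A * frob B) ^+ 2.
    rewrite exprMn !frob_sq /sf !pair_bigA /=.
    exact: CS.
  have : 0 <= frob A * frob B by apply: mulr_ge0; apply: frob_ge0.
  move: h; set X := \sum_i _; set Y := frob A * frob B; nra.
have -> : sf (A + B) = sf A + 2 * (\sum_i \sum_j A i j * B i j) + sf B.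
  rewrite /sf mulr_sumr -!big_split /=; apply: eq_bigr => i _.
  rewrite mulr_sumr -!big_split /=; apply: eq_bigr => j _; rewrite mxE; ring.
rewrite sqrrD !frob_sq; lra.
Qed.

Lemma frob_opp m n (A : 'M[R]_(m, n)) : frob (- A) = frob A.
Proof.
rewrite /frob; congr Num.sqrt; apply: eq_bigr => i _; apply: eq_bigr => j _.
by rewrite mxE sqrrN.
Qed.

Lemma frob_subC m n (A B : 'M[R]_(m, n)) : frob (A - B) = frob (B - A).
Proof. by rewrite -frob_opp opprB. Qed.

End Frob.
Section Meas.
Context (d0 : measure_display) (T : measurableType d0) (R : realType).

Lemma minv : measurable_fun setT (@GRing.inv R).
Proof.
rewrite (_ : setT = [set~ (0:R)] `|` [set 0]); last first.
  by apply/seteqP; split => x //= _; case: (eqVneq x 0) => [->|/eqP]; [right|left].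
have m1 : measurable [set (0:R)] by [].
apply/measurable_funU => //; first exact: measurableC.
split; last exact: measurable_fun_set1.
apply: open_continuous_measurable_fun.
  by apply: closed_openC; exact/accessible_closed_set1/hausdorff_accessible/Rhausdorff.
move=> x; rewrite inE => /eqP x0; exact: inv_continuous.
Qed.

Lemma msqrt : measurable_fun setT (@Num.sqrt R).
Proof. apply: continuous_measurable_fun; exact: sqrt_continuous. Qed.

Definition mmx p q (A : T -> 'M[R]_(p, q)) := forall i j, measurable_fun setT (fun w => A w i j).

Lemma mmx_cst p q (M : 'M[R]_(p, q)) : mmx (fun _ => M).
Proof. by move=> i j; exact: measurable_cst. Qed.

Lemma mmx_add p q (A B : T -> 'M[R]_(p, q)) : mmx A -> mmx B -> mmx (fun w => A w + B w).
Proof.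
move=> mA mB i j; rewrite (_ : (fun w => _) = (fun w => A w i j + B w i j)).
  exact: measurable_funD.
by apply/funext => w; rewrite mxE.
Qed.

Lemma mmx_opp p q (A : T -> 'M[R]_(p, q)) : mmx A -> mmx (fun w => - A w).
Proof.
move=> mA i j; rewrite (_ : (fun w => _) = (fun w => - A w i j)).
  exact: measurable_funN.
by apply/funext => w; rewrite mxE.
Qed.

Lemma mmx_sub p q (A B : T -> 'M[R]_(p, q)) : mmx A -> mmx B -> mmx (fun w => A w - B w).
Proof. by move=> mA mB; apply: mmx_add => //; exact: mmx_opp. Qed.

Lemma mmx_tr p q (A : T -> 'M[R]_(p, q)) : mmx A -> mmx (fun w => (A w)^T).
Proof.
move=> mA i j; rewrite (_ : (fun w => _) = (fun w => A w j i)) //.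
by apply/funext => w; rewrite mxE.
Qed.

Lemma mmx_mul p q r (A : T -> 'M[R]_(p, q)) (B : T -> 'M[R]_(q, r)) :
  mmx A -> mmx B -> mmx (fun w => A w *m B w).
Proof.
move=> mA mB i j; rewrite (_ : (fun w => _) = (fun w => \sum_k A w i k * B w k j)).
  by apply: measurable_sum => k; exact: measurable_funM.
by apply/funext => w; rewrite mxE.
Qed.

Lemma mmx_scale p q (f : T -> R) (A : T -> 'M[R]_(p, q)) :
  measurable_fun setT f -> mmx A -> mmx (fun w => f w *: A w).
Proof.
move=> mf mA i j; rewrite (_ : (fun w => _) = (fun w => f w * A w i j)).
  exact: measurable_funM.
by apply/funext => w; rewrite mxE.
Qed.

Lemma mdet p (A : T -> 'M[R]_p) : mmx A -> measurable_fun setT (fun w => \det (A w)).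
Proof.
move=> mA; rewrite /determinant.
apply: measurable_sum => s; apply: measurable_funM; first exact: measurable_cst.
by apply: measurable_prod => i _; exact: mA.
Qed.

Lemma mmx_adj p (A : T -> 'M[R]_p) : mmx A -> mmx (fun w => \adj (A w)).
Proof.
move=> mA i j; rewrite (_ : (fun w => _) = (fun w => cofactor (A w) j i)); last first.
  by apply/funext => w; rewrite mxE.
rewrite /cofactor; apply: measurable_funM; first exact: measurable_cst.
apply: (mdet (A := fun w => row' j (col' i (A w)))) => k l.
rewrite (_ : (fun w => _) = (fun w => A w (lift j k) (lift i l))) //.
by apply/funext => w; rewrite !mxE.
Qed.

Lemma mmx_inv p (A : T -> 'M[R]_p) : mmx A -> (forall w, A w \in unitmx) ->
  mmx (fun w => invmx (A w)).
Proof.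
move=> mA uA; rewrite (_ : (fun w => _) = (fun w => (\det (A w))^-1 *: \adj (A w))).
  apply: mmx_scale; last exact: mmx_adj.
  exact: (measurableT_comp minv (mdet mA)).
by apply/funext => w; rewrite /invmx uA.
Qed.

Lemma mfrob p q (A : T -> 'M[R]_(p, q)) : mmx A -> measurable_fun setT (fun w => frob (A w)).
Proof.
move=> mA; apply: (measurableT_comp msqrt).
apply: measurable_sum => i; apply: measurable_sum => j.
exact: measurable_funX.
Qed.

Lemma mle (f g : T -> R) : measurable_fun setT f -> measurable_fun setT g ->
  measurable [set w | f w <= g w].
Proof.
move=> mf mg.
rewrite (_ : [set w | f w <= g w] = setT `&` (fun w => f w <= g w) @^-1` [set true]).
  by apply: (measurable_fun_ler mf mg measurableT).
by apply/seteqP; split => w /=; [move=> ->|case=> _ ->].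
Qed.

End Meas.
Ltac mt := repeat first
 [ exact: mmx_cst | assumption | exact: measurable_cst
 | match goal with
   | |- mmx (fun w => @?a w + @?b w) => apply: (mmx_add (A:=a) (B:=b))
   | |- mmx (fun w => - @?a w) => apply: (mmx_opp (A:=a))
   | |- mmx (fun w => @?a w *m @?b w) => apply: (mmx_mul (A:=a) (B:=b))
   | |- mmx (fun w => (@?a w)^T) => apply: (mmx_tr (A:=a))
   | |- mmx (fun w => invmx (@?a w)) => apply: (mmx_inv (A:=a)); [|assumption]
   | |- measurable_fun _ (fun w => frob (@?a w)) => apply: (mfrob (A:=a))
   | |- measurable_fun _ (fun w => @?f w * @?g w) => apply: (measurable_funM (f:=f) (g:=g))
   end ].
Lemma key (R : realType) d n (s : 'M[R]_(d, n)) (H : 'M[R]_n) (f y xbar : 'cV[R]_n) c eps :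
  0 < eps -> s *m H *m s^T \in unitmx ->
  frob (f - H *m (y - xbar)) <= c * frob (y - xbar) ->
  [/\ frob (s^T *m s *m H *m s^T *m s - H) <= eps,
      frob (y - xbar - s^T *m invmx (s *m H *m s^T) *m s *m f)
        <= (1 + eps) * frob (s *m y - s *m xbar - invmx (s *m H *m s^T) *m s *m f) &
      frob (s *m f - (s *m H *m s^T) *m s *m (y - xbar))
        <= (1 + eps) * frob (f - s^T *m (s *m H *m s^T) *m s *m (y - xbar))] ->
  frob ((y - s^T *m invmx (s *m H *m s^T) *m s *m f) - xbar)
    <= (1 + eps) ^+ 2 * (c + eps) * frob (invmx (s *m H *m s^T)) * frob (y - xbar).
Proof.
move=> e0 hU hF [hK hii hiii].
set M := s *m H *m s^T in hU hii hiii *.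
set Mi := invmx M in hii *.
set Z := s *m f - M *m s *m (y - xbar) in hiii.
set K := s^T *m s *m H *m s^T *m s - H in hK.
have h1 : (y - s^T *m Mi *m s *m f) - xbar = y - xbar - s^T *m Mi *m s *m f.
  by rewrite addrAC.
have h2 : s *m y - s *m xbar - Mi *m s *m f = - (Mi *m Z).
  have hMi : Mi *m M = 1%:M by apply: mulVmx.
  by rewrite /Z mulmxBr [Mi *m (M *m s *m _)]mulmxA [Mi *m (M *m s)]mulmxA hMi mul1mx mulmxBr [Mi *m (s *m f)]mulmxA opprB.
have h3 : f - s^T *m M *m s *m (y - xbar) = (f - H *m (y - xbar)) - K *m (y - xbar).
  by rewrite /K /M mulmxBl opprB addrA subrK !mulmxA.
rewrite (addrAC y); rewrite h2 frob_opp in hii; rewrite h3 in hiii.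
have e1 : 0 <= 1 + eps by lra.
have fMi := frob_ge0 Mi; have fe := frob_ge0 (y - xbar).
have hg : frob (f - H *m (y - xbar) - K *m (y - xbar)) <= (c + eps) * frob (y - xbar).
  apply: le_trans (frob_add _ _) _; rewrite frob_opp.
  have := frob_mul K (y - xbar).
  have : frob K * frob (y - xbar) <= eps * frob (y - xbar) by exact: ler_wpM2r.
  lra.
have hb : frob (Mi *m Z) <= frob Mi * ((1 + eps) * ((c + eps) * frob (y - xbar))).
  apply: le_trans (frob_mul _ _) _; apply: ler_wpM2l => //.
  apply: le_trans hiii _; exact: ler_wpM2l.
rewrite (_ : _ * _ = (1 + eps) * (frob Mi * ((1 + eps) * ((c + eps) * frob (y - xbar))))); last by ring.
apply: le_trans hii _; exact: ler_wpM2l.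
Qed.
Unset Implicit Arguments. Set Strict Implicit.
Theorem mainTheorem6
  (d0 : measure_display) (T : measurableType d0) (R : realType)
  (P : probability T R) (d n : nat)
  (U : set 'cV[R]_n) (F : 'cV[R]_n -> 'cV[R]_n) (xbar : 'cV[R]_n)
  (HF : 'cV[R]_n -> set 'M[R]_n) (c : R)
  (S : T -> 'M[R]_(d, n)) (y : 'cV[R]_n) (H : 'M[R]_n) (eps delta : R) :
  (0 < d)%N -> (d <= n)%N ->
  U xbar -> F xbar = 0 ->
  0 < c ->
  (forall x, U x -> forall H', HF x H' -> frob (F x - H' *m (x - xbar)) <= c * frob (x - xbar)) ->
  (forall i j, measurable_fun setT (fun w => S w i j)) ->
  JL_type P S ->
  U y -> HF y H ->
  0 < eps -> 0 < delta ->
  (forall w, S w *m H *m (S w)^T \in unitmx) ->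
  (P [set w | (
       [/\ frob ((S w)^T *m S w *m H *m (S w)^T *m S w - H) <= eps,
           frob (y - xbar - (S w)^T *m invmx (S w *m H *m (S w)^T) *m S w *m F y)
             <= (1 + eps) * frob (S w *m y - S w *m xbar
                                  - invmx (S w *m H *m (S w)^T) *m S w *m F y) &
           frob (S w *m F y - (S w *m H *m (S w)^T) *m S w *m (y - xbar))
             <= (1 + eps) * frob (F y - (S w)^T *m (S w *m H *m (S w)^T) *m S w *m (y - xbar))])%R]
     >= (1 - delta)%:E)%E ->
  (P [set w | (
       frob ((y - (S w)^T *m invmx (S w *m H *m (S w)^T) *m S w *m F y) - xbar)
         <= (1 + eps) ^+ 2 * (c + eps) * frob (invmx (S w *m H *m (S w)^T)) * frob (y - xbar))%R]
     >= (1 - delta)%:E)%E.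
Proof.
move=> _ _ _ _ _ hF mS0 _ Uy HFy e0 _ hU hP.
have mS : mmx S by exact: mS0.
apply: (le_trans hP); apply: le_measure; rewrite ?inE.
- set A1 := [set w | frob ((S w)^T *m S w *m H *m (S w)^T *m S w - H) <= eps].
  set A2 := [set w | frob (y - xbar - (S w)^T *m invmx (S w *m H *m (S w)^T) *m S w *m F y)
             <= (1 + eps) * frob (S w *m y - S w *m xbar
                                  - invmx (S w *m H *m (S w)^T) *m S w *m F y)].
  set A3 := [set w | frob (S w *m F y - (S w *m H *m (S w)^T) *m S w *m (y - xbar))
             <= (1 + eps) * frob (F y - (S w)^T *m (S w *m H *m (S w)^T) *m S w *m (y - xbar))].
  rewrite (_ : [set w | _] = A1 `&` A2 `&` A3); last first.
    by apply/seteqP; split => w /=; [case=> ? ? ?; split; [split|]|case=> -[? ?] ?; split].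
  apply: measurableI; first apply: measurableI.
  + apply: mle; mt.
  + apply: mle; mt.
  + apply: mle; mt.
- apply: mle; mt.
- move=> w /= h; apply: key => //; exact: hF.
Qed.
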